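(* Let $A\in\mathbb{R}^{l\times m}$ and $B\in\mathbb{R}^{n\times m}$, and consider the parametrized system $A\,(c\circ x^B)=0$ with parameters $c\in\mathbb{R}^m_{>0}$. Assume $\ker A\cap\mathbb{R}^m_{>0}\neq\emptyset$, that the coefficient polytope $P$ is one-dimensional ($\dim P=1$), and that the monomial dependency is one ($d=1$). Let $\omega$, $\tilde b\in\mathbb{R}^\omega$ be as defined in the context. If $$\sum_{i'=1}^{i}\tilde b_{i'}\ge 0\ \text{ for all } i=1,\dots,\omega-1 \quad(\text{or } \textstyle\sum_{i'=1}^{i}\tilde b_{i'}\le 0 \text{ for all } i=1,\dots,\omega-1)$$ and $\tilde b_1\cdot\tilde b_\omega<0$, then $|Y_c|=1$ for all $c\in\mathbb{R}^m_{>0}$.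
   Context: Notation: for $x\in\mathbb{R}^n_{>0}$ and $y\in\mathbb{R}^n$, $x^y=\prod_{i=1}^n x_i^{y_i}$; for a matrix $B=(b^1,\dots,b^m)\in\mathbb{R}^{n\times m}$, $x^B\in\mathbb{R}^m_{>0}$ is the vector with entries $x^{b^j}$; $\circ$ denotes the componentwise product, and $(\cdot)^{-1}$ applied to a positive vector is componentwise. $1_m\in\mathbb{R}^m$ is the all-ones vector. (One class setting.) The coefficient polytope is $P=\{y\in\ker A\cap\mathbb{R}^m_{>0} : 1_m\cdot y=1\}$. The monomial dependency subspace is $D=\ker\begin{pmatrix}B\\ 1_m^{\mathsf T}\end{pmatrix}\subseteq\mathbb{R}^m$ and the monomial dependency is $d=\dim D$. The solution set on the coefficient polytope is $Y_c=\{y\in P : y^z=c^z \text{ for all } z\in D\}$. When $\dim P=1$, the closure $\overline P=\{y\in\ker A\cap\mathbb{R}^m_{\ge0}: 1_m\cdot y=1\}$ is a line segment with two endpoints $y^1,y^2$; set $q=(y^1-y^2)\circ(y^1+y^2)^{-1}\in\mathbb{R}^m$, and assume (after reordering the indices $\{1,\dots,m\}$) that $1=q_1\ge q_2\ge\cdots\ge q_m=-1$. Let $I_1,\dots,I_\omega\subseteq\{1,\dots,m\}$ be the $\omega$ equivalence classes of indices with equal (consecutive) components of $q$, ordered so that the common value $\tilde q_i$ of $q$ on $I_i$ is strictly decreasing in $i$. When $d=1$, let $b\in\mathbb{R}^m$ span $D$, and define the lumped vector $\tilde b\in\mathbb{R}^\omega$ by $\tilde b_i=\sum_{i'\in I_i}b_{i'}$.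 *)

(* Defs.v *)
From HB Require Import structures.
From mathcomp Require Import all_boot all_order all_algebra.
From mathcomp Require Import all_classical all_reals exp.
Set Implicit Arguments. Unset Strict Implicit. Unset Printing Implicit Defensive.
Import Order.TTheory GRing.Theory Num.Theory.
Local Open Scope ring_scope.

Section Defs.
Variable R : realType.

Definition vpow (m : nat) (y z : 'cV[R]_m) : R :=
  \prod_(j < m) powR (y j 0) (z j 0).

Definition inP (l m : nat) (A : 'M[R]_(l, m)) (y : 'cV[R]_m) : Prop :=
  A *m y = 0 /\ (forall j, 0 < y j 0) /\ \sum_(j < m) y j 0 = 1.

Definition inPbar (l m : nat) (A : 'M[R]_(l, m)) (y : 'cV[R]_m) : Prop :=
  A *m y = 0 /\ (forall j, 0 <= y j 0) /\ \sum_(j < m) y j 0 = 1.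

Definition aff_indep (m k : nat) (Y : 'I_k.+1 -> 'cV[R]_m) : bool :=
  row_free (\matrix_(i < k, j < m) (Y (lift ord0 i) j 0 - Y ord0 j 0)).

Definition affdim_eq (m : nat) (S : 'cV[R]_m -> Prop) (k : nat) : Prop :=
  (exists Y : 'I_k.+1 -> 'cV[R]_m, (forall i, S (Y i)) /\ aff_indep Y) /\
  (forall Y : 'I_k.+2 -> 'cV[R]_m, (forall i, S (Y i)) -> ~~ aff_indep Y).

Definition B1 (n m : nat) (B : 'M[R]_(n, m)) : 'M[R]_(n + 1, m) :=
  col_mx B (const_mx 1).

Definition inD (n m : nat) (B : 'M[R]_(n, m)) (z : 'cV[R]_m) : Prop :=
  B1 B *m z = 0.

Definition mondep (n m : nat) (B : 'M[R]_(n, m)) : nat :=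
  \rank (kermx (B1 B)^T).

Definition inYc (l n m : nat) (A : 'M[R]_(l, m)) (B : 'M[R]_(n, m))
  (c y : 'cV[R]_m) : Prop :=
  inP A y /\ forall z, inD B z -> vpow y z = vpow c z.

Definition qvec (m : nat) (y1 y2 : 'cV[R]_m) (j : 'I_m) : R :=
  (y1 j 0 - y2 j 0) / (y1 j 0 + y2 j 0).

Definition qvals (m : nat) (q : 'I_m -> R) : seq R :=
  sort (fun a b : R => b <= a) (undup [seq q j | j : 'I_m]).

Definition omega (m : nat) (q : 'I_m -> R) : nat := size (qvals q).

(* lumped vector, 0-based: btilde i = sum over the (i+1)-th class I_{i+1} *)
Definition btilde (m : nat) (q : 'I_m -> R) (b : 'cV[R]_m) (i : nat) : R :=
  \sum_(j < m | q j == nth 0 (qvals q) i) b j 0.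

End Defs.

(* Main.v *)
Require Import Defs.
From HB Require Import structures.
From mathcomp Require Import all_boot all_order all_algebra.
From mathcomp Require Import all_classical all_reals exp.
From mathcomp Require Import all_analysis.
From mathcomp Require Import ring lra.
Import Order.TTheory GRing.Theory Num.Theory.
Import numFieldNormedType.Exports.
Local Open Scope ring_scope.

Set Implicit Arguments. Unset Strict Implicit.

Section Q.
Variable R : realType.
Variables (m : nat) (q : 'I_m -> R).

Lemma qvals_uniq : uniq (qvals q).
Proof. by rewrite /qvals sort_uniq undup_uniq. Qed.

Lemma qvals_mem j : q j \in qvals q.
Proof. by rewrite /qvals mem_sort mem_undup map_f // mem_enum. Qed.

Lemma qvals_memP x : x \in qvals q -> exists j, x = q j.
Proof.
rewrite /qvals mem_sort mem_undup => /mapP [j _ ->]; by exists j.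
Qed.

Lemma qvals_sorted : sorted (fun a b : R => b <= a) (qvals q).
Proof. apply: sort_sorted => a b; exact: le_total. Qed.

Lemma qvals_le (i j : nat) : (i <= j < omega q)%N ->
  nth 0 (qvals q) j <= nth 0 (qvals q) i.
Proof.
move=> /andP [hij hj].
have hi : (i < omega q)%N by apply: leq_ltn_trans hij hj.
have tr : transitive (fun a b : R => b <= a).
  by move=> a b c /= h1 h2; apply: le_trans h2 h1.
have rf : reflexive (fun a b : R => b <= a) by move=> a /=.
exact: (sorted_leq_nth tr rf 0 qvals_sorted).
Qed.

Lemma qvals_lt (i j : nat) : (i < j < omega q)%N ->
  nth 0 (qvals q) j < nth 0 (qvals q) i.
Proof.
move=> /andP [hij hj].
have hi : (i < omega q)%N by apply: ltn_trans hij hj.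
rewrite lt_neqAle qvals_le ?(ltnW hij) ?hj // andbT.
rewrite (nth_uniq 0 hj hi qvals_uniq).
by rewrite eq_sym neq_ltn hij.
Qed.

Lemma group_sum (b : 'cV[R]_m) (f : R -> R) :
  \sum_(j < m) b j 0 * f (q j) =
  \sum_(i < omega q) btilde q b i * f (nth 0 (qvals q) i).
Proof.
have hp : forall j, (index (q j) (qvals q) < omega q)%N.
  by move=> j; rewrite /omega index_mem qvals_mem.
pose p j := Ordinal (hp j).
rewrite (partition_big p xpredT) //=.
apply: eq_bigr => i _.
rewrite /btilde mulr_suml.
have E : forall j, (p j == i) = (q j == nth 0 (qvals q) i).
  move=> j; apply/eqP/eqP => [h|h].
    by rewrite -h /= nth_index // qvals_mem.
  apply/val_inj => /=.
  by rewrite h index_uniq // qvals_uniq.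
apply: eq_big => j /=; first by rewrite E.
move=> /eqP hj; rewrite -hj /p /= nth_index // qvals_mem.
by [].
Qed.



Lemma abel_sum (be ph : nat -> R) (k : nat) :
  \sum_(i < k.+1) be i * ph i =
  \sum_(i < k) (\sum_(i' < i.+1) be i') * (ph i - ph i.+1)
  + (\sum_(i' < k.+1) be i') * ph k.
Proof.
elim: k => [|k IH].
  by rewrite big_ord0 add0r !big_ord1.
rewrite [LHS]big_ord_recr /= IH [in RHS]big_ord_recr /=.
rewrite [\sum_(i' < k.+2) be i']big_ord_recr /=.
set S := \sum_(i' < k.+1) be i'.
ring.
Qed.

Lemma ln_cross (s s' x x' : R) : -1 < s' -> s' < s -> s < 1 ->
  -1 <= x' -> x' < x -> x <= 1 ->
  ln (1 + s * x') - ln (1 + s' * x') < ln (1 + s * x) - ln (1 + s' * x).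
Proof.
move=> h1 h2 h3 h4 h5 h6.
have p1 : 0 < 1 + s * x by nra.
have p2 : 0 < 1 + s' * x by nra.
have p3 : 0 < 1 + s * x' by nra.
have p4 : 0 < 1 + s' * x' by nra.
rewrite ltrBDr addrAC ltrBDl -!lnM ?posrE //.
rewrite ltr_ln ?posrE ?mulr_gt0 //.
nra.
Qed.

Lemma abel_pos (be ph : nat -> R) (k : nat) :
  (forall i, (i < k.+1)%N -> 0 <= \sum_(i' < i.+1) be i') ->
  0 < be 0%N ->
  (forall i, (i < k.+1)%N -> ph i.+1 < ph i) ->
  \sum_(i' < k.+2) be i' = 0 ->
  0 < \sum_(i < k.+2) be i * ph i.
Proof.
move=> hS h0 hph htot.
rewrite abel_sum htot mul0r addr0 big_ord_recl /= big_ord1.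
apply: ltr_pwDl.
  by rewrite mulr_gt0 // subr_gt0 hph.
apply: sumr_ge0 => i _.
apply: mulr_ge0; first by apply: hS; rewrite ltnS ltn_ord.
by rewrite subr_ge0 ltW // hph // ltnS ltn_ord.
Qed.

Lemma btildeN (b : 'cV[R]_m) i : btilde q (- b) i = - btilde q b i.
Proof. by rewrite /btilde -sumrN; apply: eq_bigr => j _; rewrite mxE. Qed.

Lemma qvals_nth_mem (i : nat) : (i < omega q)%N -> exists j, nth 0 (qvals q) i = q j.
Proof. by move=> hi; apply: qvals_memP; rewrite mem_nth. Qed.

Lemma mono_q (b : 'cV[R]_m) (s s' : R) : -1 < s' -> s' < s -> s < 1 ->
  (forall j, -1 <= q j <= 1) ->
  \sum_(j < m) b j 0 = 0 ->
  (1 < omega q)%N ->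
  (forall i, (i < (omega q).-1)%N -> 0 <= \sum_(i' < i.+1) btilde q b i') ->
  0 < btilde q b 0 ->
  0 < \sum_(j < m) b j 0 * (ln (1 + s * q j) - ln (1 + s' * q j)).
Proof.
move=> h1 h2 h3 hq hb hw hS h0.
rewrite (group_sum b (fun x => ln (1 + s * x) - ln (1 + s' * x))).
have hb' : \sum_(i < omega q) btilde q b i = 0.
  transitivity (\sum_(i < omega q) btilde q b i * (fun=> 1) (nth 0 (qvals q) i)).
    by apply: eq_bigr => i _; rewrite mulr1.
  by rewrite -(group_sum b (fun=> 1)) -[RHS]hb; apply: eq_bigr => j _; rewrite mulr1.
move: hS hb'; case: (omega q) hw (@qvals_lt) (@qvals_nth_mem) => [//|[//|k]] _ hlt hmem hS hb'.
apply: (@abel_pos (btilde q b) (fun i => ln (1 + s * nth 0 (qvals q) i) - ln (1 + s' * nth 0 (qvals q) i)) k) => //.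
move=> i hi.
have hi1 : (i.+1 < k.+2)%N by [].
have [j1 e1] := hmem _ hi1.
have [j2 e2] := hmem i (ltnW hi1).
have := hlt i i.+1; rewrite ltnSn hi1 /= => /(_ isT) hl.
apply: ln_cross => //.
  by rewrite e1; case/andP: (hq j1).
by rewrite e2; case/andP: (hq j2).
Qed.

Lemma G_inj (b : 'cV[R]_m) (s s' : R) :
  (forall j, -1 <= q j <= 1) ->
  \sum_(j < m) b j 0 = 0 ->
  ((forall i, (i < (omega q).-1)%N -> 0 <= \sum_(i' < i.+1) btilde q b i') \/
   (forall i, (i < (omega q).-1)%N -> \sum_(i' < i.+1) btilde q b i' <= 0)) ->
  btilde q b 0 * btilde q b (omega q).-1 < 0 ->
  -1 < s -> s < 1 -> -1 < s' -> s' < 1 ->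
  \sum_(j < m) b j 0 * ln (1 + s * q j) = \sum_(j < m) b j 0 * ln (1 + s' * q j) ->
  s = s'.
Proof.
move=> hq hb hcase hprod.
have hw : (1 < omega q)%N.
  move: hprod; case: (omega q) => [|[|k]] //=; rewrite -expr2 ltNge ?sqr_ge0 //.
have b0 : btilde q b 0 != 0.
  by apply/eqP => e; move: hprod; rewrite e mul0r ltxx.
have key : forall x y, -1 < y -> y < x -> x < 1 ->
    \sum_(j < m) b j 0 * ln (1 + x * q j) != \sum_(j < m) b j 0 * ln (1 + y * q j).
  move=> x y hy hxy hx.
  rewrite -subr_eq0 -sumrB.
  under eq_bigr do rewrite -mulrBr.
  case: hcase => hc.
  - have : 0 < btilde q b 0.
      rewrite lt_neqAle eq_sym b0 /=.
      by have := hc 0%N; rewrite big_ord1; apply; case: (omega q) hw => [|[|]].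
    move=> hpos; rewrite gt_eqF //.
    exact: mono_q.
  - have : 0 < btilde q (-b) 0.
      rewrite btildeN oppr_gt0 lt_neqAle b0 /=.
      by have := hc 0%N; rewrite big_ord1; apply; case: (omega q) hw => [|[|]].
    move=> hpos.
    have := @mono_q (-b) x y hy hxy hx hq.
    rewrite (_ : \sum_(j < m) (- b) j 0 = 0); last first.
      transitivity (- \sum_(j < m) b j 0); last by rewrite hb oppr0.
      by rewrite -sumrN; apply: eq_bigr => j _; rewrite mxE.
    move=> /(_ erefl hw) H.
    have : 0 < \sum_(j < m) (- b) j 0 * (ln (1 + x * q j) - ln (1 + y * q j)).
      apply: H => //.
      move=> i hi; under eq_bigr do rewrite btildeN.
      by rewrite sumrN oppr_ge0 hc.
    move=> H2.
    have E : \sum_(j < m) (- b) j 0 * (ln (1 + x * q j) - ln (1 + y * q j)) =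
      - \sum_(j < m) b j 0 * (ln (1 + x * q j) - ln (1 + y * q j)).
      by rewrite -sumrN; apply: eq_bigr => j _; rewrite mxE mulNr.
    by rewrite E oppr_gt0 in H2; rewrite lt_eqF.
move=> hs1 hs2 hs'1 hs'2 e.
case: (ltgtP s s') => // h.
- by move: (key s' s hs1 h hs'2); rewrite e eqxx.
- by move: (key s s' hs'1 h hs2); rewrite e eqxx.
Qed.

Lemma qvals_last (j0 : 'I_m) : (forall j, -1 <= q j <= 1) -> q j0 = -1 ->
  nth 0 (qvals q) (omega q).-1 = -1.
Proof.
move=> hq e0.
have hin : -1 \in qvals q by rewrite -e0 qvals_mem.
have hk : (index (-1)%R (qvals q) < omega q)%N by rewrite /omega index_mem.
have hw : (0 < omega q)%N by apply: leq_ltn_trans hk.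
have hl : ((omega q).-1 < omega q)%N by rewrite prednK.
apply/eqP; rewrite eq_le; apply/andP; split.
  have := @qvals_le (index (-1)%R (qvals q)) (omega q).-1.
  rewrite nth_index // hl andbT -ltnS prednK //; exact.
have [j ->] := qvals_nth_mem hl.
by case/andP: (hq j).
Qed.

Lemma qvals_first (j0 : 'I_m) : (forall j, -1 <= q j <= 1) -> q j0 = 1 ->
  nth 0 (qvals q) 0 = 1.
Proof.
move=> hq e0.
have hin : 1 \in qvals q by rewrite -e0 qvals_mem.
have hk : (index 1%R (qvals q) < omega q)%N by rewrite /omega index_mem.
have hw : (0 < omega q)%N by apply: leq_ltn_trans hk.
apply/eqP; rewrite eq_le; apply/andP; split.
  have [j ->] := qvals_nth_mem hw.
  by case/andP: (hq j).
have := @qvals_le 0 (index 1%R (qvals q)).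
by rewrite nth_index // hk; exact.
Qed.

End Q.

Section L.
Variable R : realType.

Lemma vpow_exp (m : nat) (y z : 'cV[R]_m) : (forall j, 0 < y j 0) ->
  vpow y z = expR (\sum_(j < m) z j 0 * ln (y j 0)).
Proof.
move=> hy; rewrite /vpow expR_sum; apply: eq_bigr => j _.
by rewrite /powR gt_eqF.
Qed.

Lemma D_span (n m : nat) (B : 'M[R]_(n, m)) (b z : 'cV[R]_m) :
  mondep B = 1%N -> inD B b -> b != 0 -> inD B z ->
  exists la : R, forall j, z j 0 = la * b j 0.
Proof.
move=> hd hb hb0 hz.
set K := kermx (B1 B)^T.
have sb : (b^T <= K)%MS.
  by apply/sub_kermxP; rewrite -trmx_mul hb trmx0.
have sz : (z^T <= K)%MS.
  by apply/sub_kermxP; rewrite -trmx_mul hz trmx0.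
have rb : \rank b^T = 1%N.
  rewrite rank_rV; case: eqP => // e.
  by move: hb0; rewrite -[b]trmxK e trmx0 eqxx.
have sK : (K <= b^T)%MS.
  have := mxrank_leqif_sup sb; rewrite /K.
  by move: hd; rewrite /mondep => ->; rewrite rb => -[_ <-].
have := submx_trans sz sK => /submxP [D hD].
exists (D 0 0) => j.
have := congr1 (fun M : 'M[R]_(1, m) => M 0 j) hD.
by rewrite !mxE big_ord1 !mxE.
Qed.

Lemma sumD_zero (n m : nat) (B : 'M[R]_(n, m)) (b : 'cV[R]_m) :
  inD B b -> \sum_(j < m) b j 0 = 0.
Proof.
move=> hb.
have := congr1 (fun M : 'M[R]_(n + 1, 1) => M (rshift n (0 : 'I_1)) 0) hb.
rewrite !mxE => h; rewrite -[RHS]h; apply: eq_bigr => j _.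
by rewrite /B1 col_mxEd mxE mul1r.
Qed.

Definition segP (l m : nat) (A : 'M[R]_(l, m)) (y1 y2 : 'cV[R]_m) :=
  forall y, inPbar A y <-> exists t : R, 0 <= t <= 1 /\ y = (1 - t) *: y1 + t *: y2.

Lemma Pbar_ends (l m : nat) (A : 'M[R]_(l, m)) (y1 y2 : 'cV[R]_m) :
  segP A y1 y2 -> inPbar A y1 /\ inPbar A y2.
Proof.
move=> hP; split; apply/hP.
  by exists 0; split; [rewrite lexx ler01 | rewrite subr0 scale1r scale0r addr0].
by exists 1; split; [rewrite ler01 lexx | rewrite subrr scale0r scale1r add0r].
Qed.

Lemma segP_swap (l m : nat) (A : 'M[R]_(l, m)) (y1 y2 : 'cV[R]_m) :
  segP A y1 y2 -> segP A y2 y1.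
Proof.
move=> hP y; rewrite hP; split => -[t [/andP [t0 t1] ->]]; exists (1 - t);
  (split; first by apply/andP; split; lra);
  by rewrite (_ : 1 - (1 - t) = t); [rewrite addrC | ring].
Qed.

Lemma endpoint_zero (l m : nat) (A : 'M[R]_(l, m)) (y1 y2 : 'cV[R]_m) :
  segP A y1 y2 -> y1 != y2 -> exists j, y1 j 0 = 0.
Proof.
move=> hP hne.
have [[Ay1 [p1 s1]] [Ay2 [p2 s2]]] := Pbar_ends hP.
case: (pselect (exists j, y1 j 0 = 0)) => // H; exfalso.
have pos : forall j, 0 < y1 j 0.
  move=> j; rewrite lt_neqAle p1 andbT; apply/eqP => e.
  by apply: H; exists j.
set S := \sum_(j < m) y2 j 0 / y1 j 0.
have S0 : 0 <= S by apply: sumr_ge0 => j _; rewrite divr_ge0.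
set eps := (1 + S)^-1.
have e0 : 0 < eps by rewrite invr_gt0; lra.
have ey : forall j, eps * y2 j 0 <= y1 j 0.
  move=> j.
  have hj : y2 j 0 / y1 j 0 <= S.
    rewrite /S (bigD1 j) //= lerDl; apply: sumr_ge0 => k _.
    by rewrite divr_ge0.
  have hj' : y2 j 0 <= S * y1 j 0 by rewrite -ler_pdivrMr.
  rewrite mulrC ler_pdivrMr; last lra.
  have := pos j; nra.
have hz : inPbar A (y1 + eps *: (y1 - y2)).
  split; first by rewrite mulmxDr -scalemxAr mulmxBr Ay1 Ay2 subrr scaler0 addr0.
  split.
    move=> j; rewrite !mxE; have := ey j; have := pos j; nra.
  under eq_bigr do rewrite !mxE.
  by rewrite big_split /= -mulr_sumr sumrB s1 s2 subrr mulr0 addr0.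
have [t [/andP [t0 t1] ht]] := (hP _).1 hz.
move/eqP: hne; apply; apply/matrixP => i k; rewrite (ord1 k).
have := congr1 (fun M : 'cV[R]_m => M i 0) ht; rewrite !mxE => e.
have : (eps + t) * (y1 i 0 - y2 i 0) = 0 by lra.
move/eqP; rewrite mulf_eq0 => /orP [|]; first by move=> /eqP; lra.
by rewrite subr_eq0 => /eqP.
Qed.

End L.

Section B.
Variable R : realType.

Lemma ln_sandwich (lo x hi : R) : 0 < lo -> lo <= x -> x <= hi ->
  `|ln x| <= `|ln lo| + `|ln hi|.
Proof.
move=> h0 h1 h2.
have l1 : ln lo <= ln x by rewrite ler_ln ?posrE //; apply: lt_le_trans h1.
have l2 : ln x <= ln hi by rewrite ler_ln ?posrE //; [apply: lt_le_trans h1 | apply: lt_le_trans h2; apply: lt_le_trans h1].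
have n1 := ler_norm (ln lo); have n2 := ler_norm (- ln lo); rewrite normrN in n2.
have n3 := ler_norm (ln hi); have n4 := ler_norm (- ln hi); rewrite normrN in n4.
rewrite ler_norml; apply/andP; split; lra.
Qed.

Lemma side_bound (m : nat) (b a e : 'I_m -> R) :
  (forall j, 0 <= a j) -> (forall j, 0 <= e j) -> (forall j, 0 < a j + e j) ->
  exists M, forall s, 0 <= s < 1 ->
   `| \sum_(j < m) b j * ln (((1 + s) * a j + (1 - s) * e j) / 2)
      - (\sum_(j < m | a j == 0) b j) * ln (1 - s) | <= M.
Proof.
move=> ha he hae.
exists (`|\sum_(j < m | a j == 0) b j * ln (e j / 2)| +
        \sum_(j < m | a j != 0) `|b j| * (`|ln (a j / 2)| + `|ln (a j + e j)|)).
move=> s /andP [s0 s1].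
rewrite (bigID (fun j => a j == 0)) /=.
have E1 : \sum_(j < m | a j == 0) b j * ln (((1 + s) * a j + (1 - s) * e j) / 2) =
   (\sum_(j < m | a j == 0) b j) * ln (1 - s) + \sum_(j < m | a j == 0) b j * ln (e j / 2).
  rewrite mulr_suml -big_split /=; apply: eq_bigr => j /eqP aj.
  have ej : 0 < e j by have := hae j; rewrite aj add0r.
  have p1 : (1 - s) \in Num.pos by rewrite posrE; lra.
  have p2 : (e j / 2) \in Num.pos by rewrite posrE divr_gt0.
  by rewrite aj mulr0 add0r -mulrA (lnM p1 p2) mulrDr.
rewrite E1.
set X := (\sum_(j < m | a j == 0) b j) * ln (1 - s).
set C1 := \sum_(j < m | a j == 0) b j * ln (e j / 2).
set R2 := (\sum_(i < m | a i != 0) _).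
rewrite (_ : X + C1 + R2 - X = C1 + R2); last by ring.
apply: le_trans (ler_normD _ _) _; apply: lerD => //.
apply: le_trans (ler_norm_sum _ _ _) _.
apply: ler_sum => j aj.
have ajp : 0 < a j by rewrite lt_neqAle eq_sym aj ha.
rewrite normrM; apply: ler_wpM2l => //.
apply: ln_sandwich.
- by rewrite divr_gt0.
- have := he j; nra.
- have := he j; nra.
Qed.

Lemma push (F : R -> R) (be M K : R) : be != 0 ->
  (forall s, 0 <= s < 1 -> `|F s - be * ln (1 - s)| <= M) ->
  exists s, (0 <= s < 1) /\ (be < 0 -> K < F s) /\ (0 < be -> F s < K).
Proof.
move=> hb hF.
have M0 : 0 <= M by apply: le_trans (hF 0 _); rewrite ?normr_ge0 // lexx ltr01.
have nb : 0 < `|be| by rewrite normr_gt0.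
set L := (`|K| + M) / `|be| + 1.
have L0 : 0 < L by rewrite /L ltr_pwDr ?ltr01 // divr_ge0 // addr_ge0.
have hL : `|be| * L = `|K| + M + `|be|.
  rewrite /L mulrDr mulr1 mulrC -mulrA mulVf ?mulr1 //; exact: lt0r_neq0.
exists (1 - expR (- L)).
have s0 : 0 <= 1 - expR (- L) by rewrite subr_ge0 expR_le1 oppr_le0 ltW.
have s1 : 1 - expR (- L) < 1 by rewrite ltrBlDr ltrDl expR_gt0.
have hs : 0 <= 1 - expR (- L) < 1 by rewrite s0 s1.
have := hF _ hs.
rewrite (_ : 1 - (1 - expR (- L)) = expR (- L)); last by ring.
rewrite expRK ler_norml => /andP [f1 f2].
have k1 := ler_norm K; have k2 := ler_norm (- K); rewrite normrN in k2.
split; first by rewrite s0 s1.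
split => hbe.
  rewrite ltr0_norm // in hL; nra.
rewrite gtr0_norm // in hL; nra.
Qed.

Lemma cont_sum_ln (m : nat) (b a d : 'I_m -> R) (x : R) :
  (forall j, 0 < a j + x * d j) ->
  {for x, continuous (fun s : R => \sum_(j < m) b j * ln (a j + s * d j))}.
Proof.
move=> hpos.
have hj : forall j, {for x, continuous (fun s : R => b j * ln (a j + s * d j))}.
  move=> j.
  apply: continuousM; first exact: cvg_cst.
  apply: (@continuous_comp _ _ _ (fun s : R => a j + s * d j) (@ln R)).
    apply: continuousD; first exact: cvg_cst.
    apply: continuousM; first exact: cvg_id.
    exact: cvg_cst.
  exact: continuous_ln.
elim: m b a d hpos hj => [|m IH] b a d hpos hj.
  have -> : (fun s : R => \sum_(j < 0) b j * ln (a j + s * d j)) = (fun=> 0).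
    by apply/funext => s; rewrite big_ord0.
  exact: cvg_cst.
have -> : (fun s : R => \sum_(j < m.+1) b j * ln (a j + s * d j)) =
  (fun s : R => \sum_(j < m) b (widen_ord (leqnSn m) j) * ln (a (widen_ord (leqnSn m) j) + s * d (widen_ord (leqnSn m) j)))
  + (fun s : R => b ord_max * ln (a ord_max + s * d ord_max)).
  by apply/funext => s; rewrite big_ord_recr.
apply: continuousD; last exact: hj.
apply: (IH (fun j => b (widen_ord (leqnSn m) j)) (fun j => a (widen_ord (leqnSn m) j)) (fun j => d (widen_ord (leqnSn m) j))).
  by move=> j; apply: hpos.
by move=> j; apply: hj.
Qed.

End B.

Unset Implicit Arguments. Set Strict Implicit.

Theorem theorem2 (R : realType) (l n m : nat)
  (A : 'M[R]_(l, m)) (B : 'M[R]_(n, m)) (y1 y2 b : 'cV[R]_m) :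
  (exists y : 'cV[R]_m, A *m y = 0 /\ forall j, 0 < y j 0) ->
  affdim_eq (inP A) 1 ->
  y1 != y2 ->
  (forall y, inPbar A y <->
     exists t : R, 0 <= t <= 1 /\ y = (1 - t) *: y1 + t *: y2) ->
  mondep B = 1%N ->
  inD B b -> b != 0 ->
  let q := qvec y1 y2 in
  let w := omega q in
  ((forall i : nat, (i < w.-1)%N -> 0 <= \sum_(i' < i.+1) btilde q b i') \/
   (forall i : nat, (i < w.-1)%N -> \sum_(i' < i.+1) btilde q b i' <= 0)) ->
  btilde q b 0 * btilde q b w.-1 < 0 ->
  forall c : 'cV[R]_m, (forall j, 0 < c j 0) ->
    exists! y : 'cV[R]_m, inYc A B c y.
Proof.
move=> [y0 [Ay0 py0]] _ hne hP hd hbD hb0 q w hcase hprod c hc.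
have hP' : segP A y1 y2 := hP.
have [[Ay1 [p1 s1]] [Ay2 [p2 s2]]] := Pbar_ends hP'.
have [ja za] := endpoint_zero hP' hne.
have hne2 : y2 != y1 by rewrite eq_sym.
have [je ze] := endpoint_zero (segP_swap hP') hne2.
pose a j := y1 j 0; pose e j := y2 j 0.
have hae : forall j, 0 < a j + e j.
  move=> j.
  pose sg := \sum_(k < m) y0 k 0.
  have sg0 : 0 < sg.
    rewrite /sg (bigD1 ja) //=; have := py0 ja.
    have : 0 <= \sum_(k < m | k != ja) y0 k 0 by apply: sumr_ge0 => k _; apply: ltW.
    lra.
  have : inPbar A (sg^-1 *: y0).
    split; first by rewrite -scalemxAr Ay0 scaler0.
    split; first by move=> k; rewrite mxE mulr_ge0 ?invr_ge0 ?ltW.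
    under eq_bigr do rewrite mxE.
    by rewrite -mulr_sumr mulVf // lt0r_neq0.
  move=> /hP [t [/andP [t0 t1] ht]].
  have := congr1 (fun M : 'cV[R]_m => M j 0) ht; rewrite !mxE => ej.
  have : 0 < sg^-1 * y0 j 0 by rewrite mulr_gt0 ?invr_gt0.
  rewrite ej /a /e; have := p1 j; have := p2 j; nra.
have ha : forall j, 0 <= a j by [].
have he : forall j, 0 <= e j by [].
have hqd : forall j, q j = (a j - e j) / (a j + e j) by [].
have hq : forall j, -1 <= q j <= 1.
  move=> j; have := hae j; have := ha j; have := he j => h1 h2 h3.
  rewrite hqd ler_pdivlMr // ler_pdivrMr //; apply/andP; split; lra.
have hqa : forall j, (q j == -1) = (a j == 0).
  move=> j; have := hae j => h; rewrite hqd.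
  apply/eqP/eqP => [E|E].
    have := congr1 (fun x => x * (a j + e j)) E; rewrite /= divfK ?lt0r_neq0 //.
    lra.
  rewrite E !add0r mulNr divff //; rewrite E add0r in h.
  by rewrite lt0r_neq0.
have hqe : forall j, (q j == 1) = (e j == 0).
  move=> j; have := hae j => h; rewrite hqd.
  apply/eqP/eqP => [E|E].
    have := congr1 (fun x => x * (a j + e j)) E; rewrite /= divfK ?lt0r_neq0 //.
    lra.
  rewrite E addr0 subr0 divff //; rewrite E addr0 in h.
  by rewrite lt0r_neq0.
have hsum := sumD_zero hbD.
have hlast : nth 0 (qvals q) w.-1 = -1.
  by apply: (qvals_last (j0 := ja)) => //; apply/eqP; rewrite hqa; apply/eqP.
have hfirst : nth 0 (qvals q) 0 = 1.
  by apply: (qvals_first (j0 := je)) => //; apply/eqP; rewrite hqe; apply/eqP.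
have hbm : btilde q b w.-1 = \sum_(j < m | a j == 0) b j 0.
  by rewrite /btilde hlast; apply: eq_bigl => j; rewrite hqa.
have hbp : btilde q b 0 = \sum_(j < m | e j == 0) b j 0.
  by rewrite /btilde hfirst; apply: eq_bigl => j; rewrite hqe.
pose Y (s : R) := ((1 + s) / 2) *: y1 + ((1 - s) / 2) *: y2.
pose Gf (s : R) j := ((1 + s) * a j + (1 - s) * e j) / 2.
have hYE : forall s j, Y s j 0 = Gf s j by move=> s j; rewrite /Y /Gf !mxE /a /e; ring.
have hGpos : forall s j, -1 < s -> s < 1 -> 0 < Gf s j.
  move=> s j h1 h2; rewrite /Gf; have := hae j; have := ha j; have := he j.
  move=> h3 h4 h5; apply: divr_gt0; last by [].
  case: (ltrgt0P (a j)) => [ap||a0]; last 2 first.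
  - by move: h4; rewrite le_eqVlt; case/orP=> [/eqP -> //|h]; lra.
  - rewrite a0 mulr0 add0r; rewrite a0 add0r in h5; nra.
  have : 0 <= (1 - s) * e j by apply: mulr_ge0 => //; lra.
  have : 0 < (1 + s) * a j by apply: mulr_gt0 => //; lra.
  lra.
have hYP : forall s, -1 < s -> s < 1 -> inP A (Y s).
  move=> s h1 h2; split.
    by rewrite /Y mulmxDr -!scalemxAr Ay1 Ay2 !scaler0 addr0.
  split; first by move=> j; rewrite hYE; apply: hGpos.
  under eq_bigr do rewrite !mxE.
  rewrite big_split /= -!mulr_sumr s1 s2; lra.
have hPY : forall y, inP A y -> exists2 s, -1 < s < 1 & y = Y s.
  move=> y [Ay [py sy]].
  have : inPbar A y by split => //; split => // j; apply: ltW.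
  move=> /hP [t [/andP [t0 t1] ht]].
  have tn0 : t != 0.
    apply/eqP => t0'; have := py ja; rewrite ht t0' !mxE za; lra.
  have tn1 : t != 1.
    apply/eqP => t1'; have := py je; rewrite ht t1' !mxE ze; lra.
  exists (1 - 2 * t).
    apply/andP; split.
      suff : t < 1 by lra.
      by rewrite lt_neqAle tn1.
    suff : 0 < t by lra.
    by rewrite lt_neqAle eq_sym tn0.
  rewrite ht /Y; congr (_ *: _ + _ *: _); lra.
have hGd : forall s, -1 < s -> s < 1 ->
    \sum_(j < m) b j 0 * ln (Gf s j) =
    \sum_(j < m) b j 0 * ln ((a j + e j) / 2) + \sum_(j < m) b j 0 * ln (1 + s * q j).
  move=> s h1 h2; rewrite -big_split /=; apply: eq_bigr => j _.
  have h := hae j.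
  have pp1 : (a j + e j) / 2 \in Num.pos by rewrite posrE divr_gt0.
  have pp2 : (1 + s * q j) \in Num.pos.
    rewrite posrE; have := hq j => /andP [u v].
    have w1 : 0 <= (1 - s) * (1 - q j) by apply: mulr_ge0; lra.
    have w2 : 0 <= (1 + s) * (1 + q j) by apply: mulr_ge0; lra.
    case: (lerP 0 (q j)) => hq0.
      have : 0 < (1 + s) * (1 + q j) by apply: mulr_gt0; lra.
      nra.
    have : 0 < (1 - s) * (1 - q j) by apply: mulr_gt0; lra.
    nra.
  rewrite -mulrDr -(lnM pp1 pp2); congr (_ * ln _).
  rewrite /Gf hqd; field; exact: lt0r_neq0.
have hVY : forall s z, -1 < s -> s < 1 ->
    vpow (Y s) z = expR (\sum_(j < m) z j 0 * ln (Gf s j)).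
  move=> s z h1 h2; rewrite vpow_exp; last by move=> j; rewrite hYE hGpos.
  by congr expR; apply: eq_bigr => j _; rewrite hYE.
pose K := \sum_(j < m) b j 0 * ln (c j 0).
have hYc : forall s, -1 < s -> s < 1 ->
    (inYc A B c (Y s) <-> \sum_(j < m) b j 0 * ln (Gf s j) = K).
  move=> s h1 h2; split.
    move=> [_ /(_ b hbD)]; rewrite hVY // vpow_exp //.
    exact: expR_inj.
  move=> hK; split; first exact: hYP.
  move=> z hz; have [la hla] := D_span hd hbD hb0 hz.
  rewrite hVY // vpow_exp //; congr expR.
  transitivity (la * \sum_(j < m) b j 0 * ln (Gf s j)).
    by rewrite mulr_sumr; apply: eq_bigr => j _; rewrite hla mulrA.
  rewrite hK /K mulr_sumr; apply: eq_bigr => j _; by rewrite hla mulrA.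
have hinj : forall s s', -1 < s -> s < 1 -> -1 < s' -> s' < 1 ->
    \sum_(j < m) b j 0 * ln (Gf s j) = \sum_(j < m) b j 0 * ln (Gf s' j) -> s = s'.
  move=> s s' h1 h2 h3 h4; rewrite hGd // hGd // => /addrI E.
  exact: (G_inj hq hsum hcase hprod h1 h2 h3 h4 E).
set bm := \sum_(j < m | a j == 0) b j 0.
set bp := \sum_(j < m | e j == 0) b j 0.
have hpm : bp * bm < 0 by rewrite /bp /bm -hbp -hbm.
have bm0 : bm != 0 by apply/eqP => E; move: hpm; rewrite E mulr0 ltxx.
have bp0 : bp != 0 by apply/eqP => E; move: hpm; rewrite E mul0r ltxx.
have [M1 hM1] := side_bound (fun j => b j 0) ha he hae.
have hae' : forall j, 0 < e j + a j by move=> j; rewrite addrC hae.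
have [M2 hM2] := side_bound (fun j => b j 0) he ha hae'.
pose f s := \sum_(j < m) b j 0 * ln (Gf s j).
have [sh [/andP [sh0 sh1] [hsh1 hsh2]]] := push K bm0 hM1.
have [tl [/andP [tl0 tl1] [htl1 htl2]]] := push K bp0 hM2.
have ftl : \sum_(j < m) b j 0 * ln (((1 + tl) * e j + (1 - tl) * a j) / 2) = f (- tl).
  by apply: eq_bigr => j _; rewrite /Gf; congr (_ * ln (_ / _)); ring.
rewrite ftl in htl1 htl2.
have hlohi : - tl <= sh by lra.
have hcont : {within `[- tl, sh], continuous f}%classic.
  apply: continuous_in_subspaceT => x; rewrite inE /= in_itv /= => /andP [x1 x2].
  have -> : f = (fun s => \sum_(j < m) b j 0 * ln ((a j + e j) / 2 + s * ((a j - e j) / 2))).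
    by apply/funext => s; apply: eq_bigr => j _; rewrite /Gf; congr (_ * ln _); ring.
  apply: cont_sum_ln => j.
  have := hGpos x j; rewrite /Gf.
  have -> : (a j + e j) / 2 + x * ((a j - e j) / 2) = ((1 + x) * a j + (1 - x) * e j) / 2 by ring.
  apply; lra.
have hmm : Num.min (f (- tl)) (f sh) <= K <= Num.max (f (- tl)) (f sh).
  rewrite ge_min le_max.
  case: (ltrgt0P bm) => hbm0; last by move: bm0; rewrite hbm0 eqxx.
  - have hbp' : bp < 0 by nra.
    have := hsh2 hbm0; have := htl1 hbp' => u v.
    by rewrite (ltW v) (ltW u) orbT.
  - have hbp' : 0 < bp by nra.
    have := hsh1 hbm0; have := htl2 hbp' => u v.
    by rewrite (ltW v) (ltW u) orbT.
have [ss hss fss] := IVT hlohi hcont hmm.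
move: hss; rewrite in_itv /= => /andP [ss1 ss2].
have hs1 : -1 < ss by lra.
have hs2 : ss < 1 by lra.
exists (Y ss); split; first by apply/hYc.
move=> y' hy'.
have [s' /andP [h1 h2] ey'] := hPY y' hy'.1.
rewrite ey' in hy' *.
congr Y; apply: hinj => //.
transitivity K; first exact: fss.
by symmetry; apply/(hYc _ h1 h2).
Qed.
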